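(* Let $n\geq 2$, $1\leq k\leq n-1$ and $w=w_1\cdots w_n\in\mathfrak{S}_n$. Let $\gamma=w_i\cdots w_j$ and $\delta=w_{i'}\cdots w_{j'}$ each be a maximal $k$-ascending section or a maximal $k$-descending section of $w$. If $j<i'$, then there is a $k$-up or a $k$-down in $w_jw_{j+1}\cdots w_{i'}$.
   Context: $\mathfrak{S}_n$ is the set of permutations $w=w_1\cdots w_n$ of $\{1,\dots,n\}$. A section of $w$ is a consecutive block $w_sw_{s+1}\cdots w_t$ ($s\le t$). A section $w_s\cdots w_t$ is a $k$-up if $s<t$ and $w_t-w_s\geq k$, and a $k$-down if $s<t$ and $w_s-w_t\geq k$; a $k$-up/$k$-down ''in'' $w_a\cdots w_b$ means one $w_s\cdots w_t$ with $a\le s<t\le b$. A section $w_i\cdots w_j$ ($i<j$) is $k$-ascending if $w_i=\min\{w_i,\dots,w_j\}$, $w_j=\max\{w_i,\dots,w_j\}$, $w_j-w_i\geq k$, and there is no $k$-down in $w_i\cdots w_j$. It is $k$-descending if $w_i=\max\{w_i,\dots,w_j\}$, $w_j=\min\{w_i,\dots,w_j\}$, $w_i-w_j\geq k$, and there is no $k$-up in $w_i\cdots w_j$. A $k$-ascending (resp. $k$-descending) section is maximal if it is not contained in another $k$-ascending (resp. $k$-descending) section. *)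

(* Defs.v *)
From mathcomp Require Import all_boot all_order all_algebra all_fingroup.
Set Implicit Arguments. Unset Strict Implicit. Unset Printing Implicit Defensive.
Import GRing.Theory Num.Theory.

(* Positions of w are 0-indexed naturals p < n (position p here is w_{p+1}
   of the paper); values are w p in 'I_n, i.e. {0,..,n-1} (a shift by one of
   {1,..,n}, which does not affect any difference or comparison). *)

Definition wval (n : nat) (w : 'S_n) (p : nat) : int :=
  match insub p with Some q => (val (w q))%:Z | None => 0%R end.

Definition kup (n : nat) (w : 'S_n) (k s t : nat) : Prop :=
  (s < t < n)%N /\ (k%:Z <= wval w t - wval w s)%R.
Definition kdown (n : nat) (w : 'S_n) (k s t : nat) : Prop :=
  (s < t < n)%N /\ (k%:Z <= wval w s - wval w t)%R.

Definition kup_in (n : nat) (w : 'S_n) (k a b : nat) : Prop :=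
  exists s t, (a <= s)%N /\ (t <= b)%N /\ kup w k s t.
Definition kdown_in (n : nat) (w : 'S_n) (k a b : nat) : Prop :=
  exists s t, (a <= s)%N /\ (t <= b)%N /\ kdown w k s t.

Definition k_ascending (n : nat) (w : 'S_n) (k i j : nat) : Prop :=
  [/\ (i < j < n)%N,
      (forall m, (i <= m <= j)%N -> (wval w i <= wval w m)%R /\ (wval w m <= wval w j)%R),
      (k%:Z <= wval w j - wval w i)%R
    & ~ kdown_in w k i j].

Definition k_descending (n : nat) (w : 'S_n) (k i j : nat) : Prop :=
  [/\ (i < j < n)%N,
      (forall m, (i <= m <= j)%N -> (wval w j <= wval w m)%R /\ (wval w m <= wval w i)%R),
      (k%:Z <= wval w i - wval w j)%R
    & ~ kup_in w k i j].

Definition max_k_ascending (n : nat) (w : 'S_n) (k i j : nat) : Prop :=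
  k_ascending w k i j /\
  forall i' j', k_ascending w k i' j' -> (i' <= i)%N -> (j <= j')%N -> i' = i /\ j' = j.

Definition max_k_descending (n : nat) (w : 'S_n) (k i j : nat) : Prop :=
  k_descending w k i j /\
  forall i' j', k_descending w k i' j' -> (i' <= i)%N -> (j <= j')%N -> i' = i /\ j' = j.

Definition max_k_section (n : nat) (w : 'S_n) (k i j : nat) : Prop :=
  max_k_ascending w k i j \/ max_k_descending w k i j.

(* Main.v *)
Require Import Defs.
From mathcomp Require Import all_boot all_order all_algebra all_fingroup.
From mathcomp Require Import zify.
Set Implicit Arguments. Unset Strict Implicit.
Import Order.TTheory GRing.Theory Num.Theory.

Definition asc (f : nat -> int) (k i j : nat) : Prop :=
  [/\ (i < j)%N,
      (forall m, (i <= m)%N -> (m <= j)%N -> (f i <= f m)%R /\ (f m <= f j)%R),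
      (k%:Z <= f j - f i)%R
    & forall s t, (i <= s)%N -> (s < t)%N -> (t <= j)%N -> (f s - f t < k%:Z)%R].

Definition nodiff (f : nat -> int) (k a b : nat) : Prop :=
  forall s t, (a <= s)%N -> (s < t)%N -> (t <= b)%N ->
    (f s - f t < k%:Z)%R /\ (f t - f s < k%:Z)%R.

Lemma lemA f k i j b m : asc f k i j -> nodiff f k j b -> (j <= m)%N -> (m <= b)%N ->
  (forall x, (j <= x)%N -> (x <= b)%N -> (f x <= f m)%R) -> asc f k i m.
Proof.
case=> hij hb hk hd nd hjm hmb hm.
have fjm : (f j <= f m)%R by apply: hm => //; exact: leq_trans hjm hmb.
split.
- lia.
- move=> x hix hxm. case: (leqP x j) => hxj.
  + have := hb x hix hxj. lia.
  + have := hm x (ltnW hxj) (leq_trans hxm hmb).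
    have := nd j x (leqnn _) hxj (leq_trans hxm hmb). lia.
- lia.
- move=> s t his hst htm. case: (leqP t j) => htj; first exact: hd.
  case: (leqP j s) => hjs.
  + have := nd s t hjs hst (leq_trans htm hmb). lia.
  + have := hb s his (ltnW hjs).
    have := nd j t (leqnn _) htj (leq_trans htm hmb). lia.
Qed.

Lemma lemB f k a i' j' m : asc f k i' j' -> nodiff f k a i' -> (a <= m)%N -> (m <= i')%N ->
  (forall x, (a <= x)%N -> (x <= i')%N -> (f m <= f x)%R) -> asc f k m j'.
Proof.
case=> hij hb hk hd nd ham hmi hm.
have fjm : (f m <= f i')%R by apply: hm => //; exact: leq_trans ham hmi.
split.
- lia.
- move=> x hmx hxj. case: (leqP i' x) => hxj'.
  + have := hb x hxj' hxj. lia.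
  + have := hm x (leq_trans ham hmx) (ltnW hxj').
    have := nd x i' (leq_trans ham hmx) hxj' (leqnn _). lia.
- lia.
- move=> s t hms hst htj. case: (leqP i' s) => his; first exact: hd.
  case: (leqP t i') => hti.
  + have := nd s t (leq_trans ham hms) hst hti. lia.
  + have := hb t (ltnW hti) htj.
    have := nd s i' (leq_trans ham hms) his (leqnn _). lia.
Qed.

Lemma lemC f k i j i' j' : asc f k i j -> asc f k i' j' -> (j < i')%N -> nodiff f k j i' ->
  asc f k i j'.
Proof.
case=> h1 hb1 hk1 hd1 [h2 hb2 hk2 hd2] hji nd.
have nji := nd j i' (leqnn _) hji (leqnn _).
split.
- lia.
- move=> x hix hxj. case: (leqP x j) => hxj1.
  + have := hb1 x hix hxj1. lia.
  case: (leqP i' x) => hxi.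
  + have := hb2 x hxi hxj. lia.
  have := nd j x (leqnn _) hxj1 (ltnW hxi).
  have := nd x i' (ltnW hxj1) hxi (leqnn _). lia.
- lia.
- move=> s t his hst htj.
  case: (leqP t j) => htj1; first exact: hd1.
  case: (leqP i' s) => hsi; first exact: hd2.
  case: (leqP j s) => hjs.
  + case: (leqP t i') => hti; first by have := nd s t hjs hst hti; lia.
    have := hb2 t (ltnW hti) htj.
    have := nd s i' hjs hsi (leqnn _). lia.
  + have := hb1 s his (ltnW hjs).
    case: (leqP t i') => hti.
    * have := nd j t (leqnn _) htj1 hti. lia.
    * have := hb2 t (ltnW hti) htj. lia.
Qed.

Lemma argmax (f : nat -> int) a b : (a <= b)%N ->
  exists m, [/\ (a <= m)%N, (m <= b)%N & forall x, (a <= x)%N -> (x <= b)%N -> (f x <= f m)%R].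
Proof.
elim: b => [|b IH] hab.
  exists 0%N; split => //; move=> x _ hx. by have -> : x = 0%N by lia.
case: (leqP a b) => hab'.
- have [m [h1 h2 h3]] := IH hab'.
  case: (leP (f m) (f b.+1)) => hc.
  + exists b.+1; split => // x hx1 hx2. case: (leqP x b) => hxb.
    * have := h3 x hx1 hxb. lia.
    * have -> : x = b.+1 by lia. done.
  + exists m; split => //; first lia. move=> x hx1 hx2. case: (leqP x b) => hxb.
    * exact: h3.
    * have -> : x = b.+1 by lia. lia.
- exists b.+1; split => // x hx1 hx2. have -> : x = b.+1 by lia. done.
Qed.

Lemma ascE n (w : 'S_n) k i j : k_ascending w k i j <-> (j < n)%N /\ asc (wval w) k i j.
Proof.
split.
- case=> /andP[h1 h2] hb hk hd; split => //; split => //.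
    by move=> m h3 h4; apply: hb; rewrite h3 h4.
  move=> s t his hst htj.
  rewrite ltNge; apply/negP => H; apply: hd; exists s, t; split => //; split => //.
  split => //; apply/andP; split => //; exact: leq_ltn_trans htj h2.
- case=> hn [h1 hb hk hd]; split => //; first by apply/andP.
    by move=> m /andP[h3 h4]; apply: hb.
  case=> s [t [hs [ht [/andP[hst _] H]]]]. have := hd s t hs hst ht. lia.
Qed.

Lemma descE n (w : 'S_n) k i j : k_descending w k i j <->
  (j < n)%N /\ asc (fun x => - wval w x)%R k i j.
Proof.
split.
- case=> /andP[h1 h2] hb hk hd; split => //; split => //.
  + move=> m h3 h4; have : (i <= m <= j)%N by rewrite h3 h4.
    move/hb; lia.
  + lia.
  move=> s t his hst htj.
  rewrite ltNge; apply/negP => H; apply: hd; exists s, t; split => //; split => //.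
  split; first (apply/andP; split => //; exact: leq_ltn_trans htj h2). lia.
- case=> hn [h1 hb hk hd]; split => //; first by apply/andP.
  + move=> m /andP[h3 h4]; have := hb m h3 h4; lia.
  + lia.
  case=> s [t [hs [ht [/andP[hst _] H]]]]. have := hd s t hs hst ht. lia.
Qed.

Lemma nodiffN f k a b : nodiff f k a b -> nodiff (fun x => - f x)%R k a b.
Proof. move=> nd s t h1 h2 h3; have := nd s t h1 h2 h3; lia. Qed.

Lemma nodiff_of n (w : 'S_n) k j i' : (i' < n)%N ->
  ~ (kup_in w k j i' \/ kdown_in w k j i') -> nodiff (wval w) k j i'.
Proof.
move=> hn H s t h1 h2 h3; split; rewrite ltNge; apply/negP => H'; apply: H.
- right; exists s, t; do 2 split => //; split => //; apply/andP; split => //; exact: leq_ltn_trans h3 hn.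
- left; exists s, t; do 2 split => //; split => //; apply/andP; split => //; exact: leq_ltn_trans h3 hn.
Qed.

Lemma argmin (f : nat -> int) a b : (a <= b)%N ->
  exists m, [/\ (a <= m)%N, (m <= b)%N & forall x, (a <= x)%N -> (x <= b)%N -> (f m <= f x)%R].
Proof.
move=> hab; have [m [h1 h2 h3]] := argmax (fun x => - f x)%R hab.
exists m; split => // x hx1 hx2; have := h3 x hx1 hx2; lia.
Qed.

From Stdlib Require Import Classical.

Theorem lemma2p7 (n : nat) (k : nat) (w : 'S_n) (i j i' j' : nat) :
  (2 <= n)%N -> (1 <= k <= n - 1)%N ->
  max_k_section w k i j -> max_k_section w k i' j' ->
  (j < i')%N ->
  kup_in w k j i' \/ kdown_in w k j i'.
Proof.
move=> _ _ S1 S2 hji.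
case: (classic (kup_in w k j i' \/ kdown_in w k j i')) => // H; exfalso.
have hi'n : (i' < n)%N.
  case: S2 => [[/ascE [hn [h _ _ _]] _]|[/descE [hn [h _ _ _]] _]]; lia.
have nd := nodiff_of hi'n H.
have ndN := nodiffN nd.
have hjj : (j <= i')%N by lia.
case: S1 => [[/ascE [hn1 A1] M1]|[/descE [hn1 A1] M1]];
case: S2 => [[/ascE [hn2 A2] M2]|[/descE [hn2 A2] M2]].
- have hjj' : (j <= j')%N by case: A2 => *; lia.
  have C := lemC A1 A2 hji nd.
  have [_ E] := M1 i j' (proj2 (ascE _ _ _ _) (conj hn2 C)) (leqnn _) hjj'.
  case: A2 => *; lia.
- have [m [hm1 hm2 hm3]] := argmax (wval w) hjj.
  have Am := lemA A1 nd hm1 hm2 hm3.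
  have Bm := lemB A2 ndN hm1 hm2 (fun x h1 h2 => (ltac:(have := hm3 x h1 h2; lia))).
  have [_ E1] := M1 i m (proj2 (ascE _ _ _ _) (conj (leq_ltn_trans hm2 hi'n) Am)) (leqnn _) hm1.
  have [E2 _] := M2 m j' (proj2 (descE _ _ _ _) (conj hn2 Bm)) hm2 (leqnn _).
  lia.
- have [m [hm1 hm2 hm3]] := argmin (wval w) hjj.
  have Am := lemA A1 ndN hm1 hm2 (fun x h1 h2 => (ltac:(have := hm3 x h1 h2; lia))).
  have Bm := lemB A2 nd hm1 hm2 hm3.
  have [_ E1] := M1 i m (proj2 (descE _ _ _ _) (conj (leq_ltn_trans hm2 hi'n) Am)) (leqnn _) hm1.
  have [E2 _] := M2 m j' (proj2 (ascE _ _ _ _) (conj hn2 Bm)) hm2 (leqnn _).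
  lia.
- have hjj' : (j <= j')%N by case: A2 => *; lia.
  have C := lemC A1 A2 hji ndN.
  have [_ E] := M1 i j' (proj2 (descE _ _ _ _) (conj hn2 C)) (leqnn _) hjj'.
  case: A2 => *; lia.
Qed.
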